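(* In the multi-period newsvendor setting described in the context, suppose the demands are independent with $X_t\sim\mathrm{Pois}(\lambda_t)$ for $t\in\{1,\dots,T\}$. Then for every fixed $\boldsymbol q\in\mathbb N_0^T$, the expected cost $C_{\boldsymbol\lambda}(\boldsymbol q)$ is convex in $\lambda_t$ for each $t=1,\dots,T$.
   Context: There are $T$ periods; $q_t\in\mathbb N_0$ is the order delivered at the start of period $t$, $X_t$ the demand in period $t$. Inventory: $I_t=\sum_{k=1}^t(q_k-X_k)$, $I_t^+=\max\{I_t,0\}$, $I_t^-=\max\{-I_t,0\}$. Nonnegative constants: holding cost $h$, backorder cost $b$, price $p$; unit ordering costs $w_t$. The expected cost under rates $\boldsymbol\lambda$ is $$C_{\boldsymbol\lambda}(\boldsymbol q)=p\,\mathbb E_{\boldsymbol\lambda}[I_T^-]+\sum_{t=1}^T\Big(h\,\mathbb E_{\boldsymbol\lambda}[I_t^+]+b\,\mathbb E_{\boldsymbol\lambda}[I_t^-]+w_tq_t-p\,\mathbb E_{\boldsymbol\lambda}[X_t]\Big).$$ *)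

(* Defs.v *)
From Stdlib Require Import Reals Lra Lia.
From Coquelicot Require Import Coquelicot.
Open Scope R_scope.

Definition poisson_pmf (l : R) (j : nat) : R := exp (- l) * l ^ j / INR (Factorial.fact j).

Definition upd {A : Type} (f : nat -> A) (k : nat) (v : A) : nat -> A :=
  fun i => if Nat.eqb i k then v else f i.

(* Demand realisations are functions x : nat -> nat (only x 1, ..., x T matter).
   [iexp n k lam f x] integrates f over coordinates k, ..., k+n-1, each
   independently Poisson(lam i) distributed, i.e. the expectation under the
   product (independent) law, written as an iterated series. *)
Fixpoint iexp (n k : nat) (lam : nat -> R) (f : (nat -> nat) -> R)
  (x : nat -> nat) : R :=
  match n with
  | O => f x
  | S n' => Series (fun j => poisson_pmf (lam k) j * iexp n' (S k) lam f (upd x k j))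
  end.

Definition Expect (T : nat) (lam : nat -> R) (f : (nat -> nat) -> R) : R :=
  iexp T 1 lam f (fun _ => O).

Fixpoint inv (q x : nat -> nat) (t : nat) : R :=
  match t with
  | O => 0
  | S t' => inv q x t' + (INR (q t) - INR (x t))
  end.

Definition pos (y : R) : R := Rmax y 0.
Definition neg (y : R) : R := Rmax (- y) 0.

Fixpoint sum1 (T : nat) (g : nat -> R) : R :=
  match T with O => 0 | S T' => sum1 T' g + g T end.

Definition cost (T : nat) (h b p : R) (w : nat -> R) (lam : nat -> R)
  (q : nat -> nat) : R :=
  p * Expect T lam (fun x => neg (inv q x T)) +
  sum1 T (fun t =>
    h * Expect T lam (fun x => pos (inv q x t)) +
    b * Expect T lam (fun x => neg (inv q x t)) +
    w t * INR (q t) -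
    p * Expect T lam (fun x => INR (x t))).

(* Main.v *)
Require Import Defs.
From Stdlib Require Import Reals Lra Lia FunctionalExtensionality.
From Coquelicot Require Import Coquelicot.
Open Scope R_scope.

Lemma fact_pos j : 0 < INR (Factorial.fact j).
Proof. apply lt_0_INR, Factorial.lt_O_fact. Qed.

Lemma pmf_nonneg l j : 0 <= l -> 0 <= poisson_pmf l j.
Proof.
  intros Hl. unfold poisson_pmf. apply Rmult_le_pos.
  apply Rmult_le_pos. left; apply exp_pos. apply pow_le; auto.
  left; apply Rinv_0_lt_compat, fact_pos.
Qed.

Lemma pmf_series l : is_series (poisson_pmf l) 1.
Proof.
  pose proof (is_exp_Reals l) as H. unfold is_pseries in H.
  apply (is_series_scal_l (exp (-l))) in H.
  replace 1 with (scal (exp (-l)) (exp l)).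
  2:{ unfold scal; simpl; unfold mult; simpl. rewrite <- exp_plus.
      replace (-l + l) with 0 by ring. apply exp_0. }
  eapply is_series_ext; [|exact H]. intros n. simpl.
  unfold scal; simpl; unfold mult; simpl. rewrite pow_n_pow.
  unfold poisson_pmf. field. apply Rgt_not_eq, fact_pos.
Qed.

Lemma pmf_S l k : INR (S k) * poisson_pmf l (S k) = l * poisson_pmf l k.
Proof.
  unfold poisson_pmf. change (Factorial.fact (S k)) with (S k * Factorial.fact k)%nat.
  rewrite mult_INR. simpl pow. field. split. apply Rgt_not_eq, fact_pos.
  apply not_0_INR. lia.
Qed.

Lemma pmf_mean l : is_series (fun j => INR j * poisson_pmf l j) l.
Proof.
  apply is_series_decr_1.
  assert (H : is_series (fun k => INR (S k) * poisson_pmf l (S k)) (scal l 1)).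
  { pose proof (@is_series_scal_l R_AbsRing R_NormedModule l _ _ (pmf_series l)) as H0.
    eapply is_series_ext; [|exact H0].
    intros n. rewrite pmf_S. reflexivity. }
  assert (E : scal l 1 = plus l (opp (INR 0 * poisson_pmf l 0))).
  { simpl. unfold plus, opp, scal; simpl. unfold mult, plus, opp; simpl. ring. }
  rewrite E in H. exact H.
Qed.

Lemma norm_R (x : R) : norm x = Rabs x.
Proof. reflexivity. Qed.

Lemma step_bound l C D (u : nat -> R) : 0 <= l -> 0 <= C -> 0 <= D ->
  (forall j, Rabs (u j) <= C + D * INR j) ->
  ex_series (fun j => poisson_pmf l j * u j) /\
  Rabs (Series (fun j => poisson_pmf l j * u j)) <= C + D * l.
Proof.
  intros Hl HC HD Hu.
  set (b := fun j => C * poisson_pmf l j + D * (INR j * poisson_pmf l j)).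
  assert (Hb : is_series b (C * 1 + D * l)).
  { pose proof (@is_series_scal_l R_AbsRing R_NormedModule C _ _ (pmf_series l)) as H1.
    pose proof (@is_series_scal_l R_AbsRing R_NormedModule D _ _ (pmf_mean l)) as H2.
    pose proof (is_series_plus _ _ _ _ H1 H2) as H3. exact H3. }
  assert (Hle : forall j, Rabs (poisson_pmf l j * u j) <= b j).
  { intros j. unfold b. rewrite Rabs_mult, (Rabs_pos_eq _ (pmf_nonneg l j Hl)).
    pose proof (pmf_nonneg l j Hl). specialize (Hu j).
    apply Rle_trans with (poisson_pmf l j * (C + D * INR j)).
    apply Rmult_le_compat_l; auto. lra. }
  assert (Ea : ex_series (fun j => Rabs (poisson_pmf l j * u j))).
  { apply (@ex_series_le R_AbsRing R_CompleteNormedModule _ b). intros j. rewrite norm_R, Rabs_Rabsolu. apply Hle.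
    exists (C * 1 + D * l). exact Hb. }
  split. apply ex_series_Rabs; exact Ea.
  eapply Rle_trans. apply Series_Rabs; exact Ea.
  replace (C + D * l) with (Series b).
  apply Series_le. intros j; split. apply Rabs_pos. apply Hle. exists (C*1+D*l); exact Hb.
  rewrite (is_series_unique _ _ Hb). ring.
Qed.

Fixpoint xs (M : nat) (x : nat -> nat) : R :=
  match M with O => 0 | S M' => xs M' x + INR (x M') end.

Lemma xs_nonneg M x : 0 <= xs M x.
Proof. induction M; simpl. lra. pose proof (pos_INR (x M)). lra. Qed.

Lemma xs_upd M x k j : xs M (upd x k j) <= xs M x + INR M * INR j.
Proof.
  induction M; cbn [xs]. simpl; lra.
  rewrite S_INR.

  assert (INR (upd x k j M) <= INR (x M) + INR j).
  { unfold upd. destruct (Nat.eqb M k). pose proof (pos_INR (x M)); lra.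
    pose proof (pos_INR j); lra. }
  lra.
Qed.

Definition growth (f : (nat -> nat) -> R) :=
  exists A B M, 0 <= A /\ 0 <= B /\ forall x, Rabs (f x) <= A + B * xs M x.

Lemma growth_step g l k : growth g -> 0 <= l ->
  (forall x, ex_series (fun j => poisson_pmf l j * g (upd x k j))) /\
  growth (fun x => Series (fun j => poisson_pmf l j * g (upd x k j))).
Proof.
  intros [A [B [M [HA [HB Hg]]]]] Hl.
  assert (H : forall x, ex_series (fun j => poisson_pmf l j * g (upd x k j)) /\
     Rabs (Series (fun j => poisson_pmf l j * g (upd x k j))) <= (A + B * xs M x) + (B * INR M) * l).
  { intros x. apply step_bound; auto.
    pose proof (xs_nonneg M x). nra. pose proof (pos_INR M). nra.
    intros j. eapply Rle_trans. apply Hg. pose proof (xs_upd M x k j).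
    nra. }
  split. intros x; apply H.
  exists (A + B * INR M * l), B, M. split. pose proof (pos_INR M). assert (0 <= B * INR M * l) by (apply Rmult_le_pos; auto; apply Rmult_le_pos; auto). lra. split; auto.
  intros x. destruct (H x) as [_ H2]. replace (A + B * INR M * l + B * xs M x) with (A + B * xs M x + B * INR M * l) by ring. exact H2.
Qed.

Lemma iexp_growth n : forall k lam f,
  (forall i, (k <= i < k + n)%nat -> 0 <= lam i) -> growth f ->
  growth (iexp n k lam f).
Proof.
  induction n; intros k lam f Hl Hf; simpl.
  - destruct Hf as [A [B [M H]]]. exists A, B, M. exact H.
  - apply (growth_step (iexp n (S k) lam f) (lam k) k).
    apply IHn; auto. intros i Hi; apply Hl; lia. apply Hl; lia.
Qed.

Lemma iexp_ex n k lam f x :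
  (forall i, (k <= i < k + S n)%nat -> 0 <= lam i) -> growth f ->
  ex_series (fun j => poisson_pmf (lam k) j * iexp n (S k) lam f (upd x k j)).
Proof.
  intros Hl Hf. apply growth_step. apply iexp_growth; auto.
  intros i Hi; apply Hl; lia. apply Hl; lia.
Qed.

Lemma Series_zero : Series (fun _ => 0) = 0.
Proof. apply is_series_unique. apply is_series_Reals. intros e He. exists O. intros n _.
  unfold R_dist. rewrite sum_cte. rewrite Rmult_0_l, Rminus_0_r, Rabs_R0. exact He. Qed.

Lemma iexp_opp n : forall k lam f x,
  iexp n k lam (fun y => - f y) x = - iexp n k lam f x.
Proof.
  induction n; intros k lam f x; simpl. reflexivity.
  rewrite <- Series_opp. apply Series_ext. intros j. rewrite IHn. ring.
Qed.

Lemma iexp_scal n : forall k lam f x c,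
  iexp n k lam (fun y => c * f y) x = c * iexp n k lam f x.
Proof.
  induction n; intros k lam f x c; simpl. reflexivity.
  rewrite <- Series_scal_l. apply Series_ext. intros j. rewrite IHn. ring.
Qed.

Lemma iexp_plus n : forall k lam f g x,
  (forall i, (k <= i < k + n)%nat -> 0 <= lam i) -> growth f -> growth g ->
  iexp n k lam (fun y => f y + g y) x = iexp n k lam f x + iexp n k lam g x.
Proof.
  induction n; intros k lam f g x Hl Hf Hg; simpl. reflexivity.
  rewrite <- Series_plus.
  - apply Series_ext. intros j. rewrite IHn. ring. intros i Hi; apply Hl; lia. auto. auto.
  - apply iexp_ex; auto.
  - apply iexp_ex; auto.
Qed.

Lemma iexp_nonneg n : forall k lam f x,
  (forall i, (k <= i < k + n)%nat -> 0 <= lam i) -> growth f -> (forall y, 0 <= f y) ->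
  0 <= iexp n k lam f x.
Proof.
  induction n; intros k lam f x Hl Hf Hp; simpl. apply Hp.
  rewrite <- Series_zero. apply Series_le. intros j. split. lra.
  apply Rmult_le_pos. apply pmf_nonneg, Hl; lia. apply IHn; auto.
  intros i Hi; apply Hl; lia. apply iexp_ex; auto.
Qed.

Lemma iexp_ext_lam n : forall k lam1 lam2 f x,
  (forall i, (k <= i)%nat -> lam1 i = lam2 i) ->
  iexp n k lam1 f x = iexp n k lam2 f x.
Proof.
  induction n; intros k lam1 lam2 f x H; simpl. reflexivity.
  rewrite (H k) by lia. apply Series_ext. intros j.
  rewrite (IHn (S k) lam1 lam2). reflexivity. intros i Hi; apply H; lia.
Qed.

Lemma upd_comm (x : nat -> nat) t j k i : t <> k ->
  upd (upd x t j) k i = upd (upd x k i) t j.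
Proof.
  intros H. apply functional_extensionality. intros m. unfold upd.
  destruct (Nat.eqb_spec m k); destruct (Nat.eqb_spec m t); auto. lia.
Qed.

Lemma iexp_upd_comm n : forall k lam f x t j, (t < k)%nat ->
  iexp n k lam f (upd x t j) = iexp n k lam (fun y => f (upd y t j)) x.
Proof.
  induction n; intros k lam f x t j H; simpl. reflexivity.
  apply Series_ext. intros i. rewrite upd_comm by lia. rewrite IHn by lia. reflexivity.
Qed.

Lemma term_le_series (a : nat -> R) m : (forall n, 0 <= a n) -> ex_series a -> a m <= Series a.
Proof.
  intros Hp He. rewrite (Series_incr_n a (S m)) by (lia || exact He). simpl pred.
  assert (H1 : a m <= sum_f_R0 a m).
  { destruct m. simpl; lra. simpl. pose proof (cond_pos_sum a m Hp). lra. }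
  assert (H2 : 0 <= Series (fun k => a (S m + k)%nat)).
  { rewrite <- Series_zero. apply Series_le. intros n; split; [lra| apply Hp].
    apply (@ex_series_incr_n R_AbsRing R_NormedModule a (S m)). exact He. }
  lra.
Qed.

Definition lg (G : nat -> R) :=
  exists C B, 0 <= C /\ 0 <= B /\ forall j, Rabs (G j) <= C + B * INR j.

Definition coef (G : nat -> R) j := G j / INR (Factorial.fact j).
Definition HP (G : nat -> R) l := exp (-l) * PSeries (coef G) l.

Lemma series_HP G l : Series (fun j => poisson_pmf l j * G j) = HP G l.
Proof.
  unfold HP, PSeries. rewrite <- Series_scal_l. apply Series_ext. intros j.
  unfold poisson_pmf, coef. field. apply Rgt_not_eq, fact_pos.
Qed.

Lemma lg_shift G : lg G -> lg (fun j => G (S j)).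
Proof.
  intros [C [B [HC [HB H]]]]. exists (C + B), B. split. lra. split. lra.
  intros j. eapply Rle_trans. apply H. rewrite S_INR. lra.
Qed.

Lemma lg_diff G : lg G -> lg (fun j => G (S j) - G j).
Proof.
  intros [C [B [HC [HB H]]]]. exists (2 * C + B), (2 * B). split. lra. split. lra.
  intros j. eapply Rle_trans. apply Rabs_triang. rewrite Rabs_Ropp.
  pose proof (H (S j)). pose proof (H j). rewrite S_INR in *. lra.
Qed.

Lemma lg_radius G : lg G -> forall l, Rbar_lt (Rabs l) (CV_radius (coef G)).
Proof.
  intros HG l. set (r := Rabs l + 1).
  assert (Hr : 0 <= r) by (unfold r; pose proof (Rabs_pos l); lra).
  destruct HG as [C [B [HC [HB H]]]].
  destruct (step_bound r C B (fun j => Rabs (G j)) Hr HC HB) as [Hex _].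
  { intros j. rewrite Rabs_Rabsolu. apply H. }
  assert (Hin : exists M, forall n, Rabs (coef G n * r ^ n) <= M).
  { exists (exp r * Series (fun j => poisson_pmf r j * Rabs (G j))).
    intros n. replace (Rabs (coef G n * r ^ n)) with (exp r * (poisson_pmf r n * Rabs (G n))).
    apply Rmult_le_compat_l. left; apply exp_pos.
    apply (term_le_series (fun j => poisson_pmf r j * Rabs (G j))); auto.
    intros j. apply Rmult_le_pos. apply pmf_nonneg; auto. apply Rabs_pos.
    unfold coef, poisson_pmf. rewrite Rabs_mult. unfold Rdiv. rewrite Rabs_mult.
    rewrite (Rabs_pos_eq (r ^ n)) by (apply pow_le; auto).
    rewrite (Rabs_pos_eq (/ _)) by (left; apply Rinv_0_lt_compat, fact_pos).
    replace (exp r * (exp (- r) * r ^ n * / INR (Factorial.fact n) * Rabs (G n)))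
      with ((exp r * exp (- r)) * (Rabs (G n) * / INR (Factorial.fact n) * r ^ n)) by ring.
    rewrite <- exp_plus. replace (r + - r) with 0 by ring. rewrite exp_0. ring. }
  destruct (CV_radius_bounded (coef G)) as [Hub _].
  apply Rbar_lt_le_trans with (Finite r). simpl. unfold r; lra.
  apply Hub. exact Hin.
Qed.

Lemma P_derive G l : lg G ->
  is_derive (PSeries (coef G)) l (PSeries (coef (fun j => G (S j))) l).
Proof.
  intros HG. pose proof (is_derive_PSeries (coef G) l (lg_radius G HG l)) as H.
  replace (PSeries (coef (fun j => G (S j))) l) with (PSeries (PS_derive (coef G)) l).
  exact H. apply PSeries_ext. intros n. unfold PS_derive, coef.
  change (Factorial.fact (S n)) with (S n * Factorial.fact n)%nat.
  rewrite mult_INR. field. split. apply Rgt_not_eq, fact_pos. apply not_0_INR. lia.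
Qed.

Lemma HP_derive G l : lg G -> is_derive (HP G) l (HP (fun j => G (S j) - G j) l).
Proof.
  intros HG.
  assert (He : is_derive (fun y => exp (-y)) l (- exp (-l))).
  { auto_derive. auto. ring. }
  pose proof (is_derive_mult _ _ _ _ _ He (P_derive G l HG) Rmult_comm) as H.
  unfold HP.
  replace (exp (- l) * PSeries (coef (fun j => G (S j) - G j)) l) with
    (plus (mult (- exp (- l)) (PSeries (coef G) l))
          (mult (exp (- l)) (PSeries (coef (fun j => G (S j))) l))).
  exact H.
  unfold plus, mult; simpl.
  replace (PSeries (coef (fun j => G (S j) - G j)) l) with
    (PSeries (PS_minus (coef (fun j => G (S j))) (coef G)) l).
  rewrite PSeries_minus. ring.
  apply CV_radius_inside, lg_radius, lg_shift, HG.
  apply CV_radius_inside, lg_radius, HG.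
  apply PSeries_ext. intros n. unfold PS_minus, coef. simpl. unfold minus, plus, opp; simpl.
  field. apply Rgt_not_eq, fact_pos.
Qed.

Lemma HP_nonneg G l : lg G -> (forall j, 0 <= G j) -> 0 <= l -> 0 <= HP G l.
Proof.
  intros HG Hp Hl. unfold HP. apply Rmult_le_pos. left; apply exp_pos.
  unfold PSeries. rewrite <- Series_zero. apply Series_le.
  intros n; split. lra. apply Rmult_le_pos. unfold coef. apply Rmult_le_pos; auto.
  left; apply Rinv_0_lt_compat, fact_pos. apply pow_le; auto.
  pose proof (CV_radius_inside _ _ (lg_radius G HG l)) as H.
  eapply ex_series_ext; [|exact H]. intros n. simpl. rewrite pow_n_pow.
  unfold scal; simpl; unfold mult; simpl. ring.
Qed.

Lemma cont_of_derive (f : R -> R) (df x : R) : is_derive f x df -> continuity_pt f x.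
Proof.
  intros H. apply continuity_pt_filterlim. apply (@ex_derive_continuous R_AbsRing R_NormedModule). exists df. exact H.
Qed.

Lemma mvt (f df : R -> R) (a b : R) : (forall x, is_derive f x (df x)) ->
  exists c, Rmin a b <= c <= Rmax a b /\ f b - f a = df c * (b - a).
Proof.
  intros H. apply MVT_gen. intros x _. apply H. intros x _. eapply cont_of_derive, H.
Qed.

Definition D2 (G : nat -> R) j := G (S (S j)) - 2 * G (S j) + G j.

Lemma HP_conv G l1 l2 th : lg G -> (forall j, 0 <= D2 G j) ->
  0 < l1 -> 0 < l2 -> 0 <= th <= 1 ->
  HP G (th * l1 + (1 - th) * l2) <= th * HP G l1 + (1 - th) * HP G l2.
Proof.
  intros HG Hc H1 H2 Hth.
  set (DG := fun j => G (S j) - G j).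
  set (DDG := fun j => DG (S j) - DG j).
  assert (HDG : lg DG) by (apply lg_diff; auto).
  assert (HDDG : lg DDG) by (apply lg_diff; auto).
  assert (Hmono : forall a b, 0 <= a -> a <= b -> HP DG a <= HP DG b).
  { intros a b Ha Hab. destruct (mvt (HP DG) (HP DDG) a b) as [c [Hc' Heq]].
    intros x; apply HP_derive; auto.
    assert (0 <= c). { unfold Rmin in Hc'. destruct (Rle_dec a b); lra. }
    assert (0 <= HP DDG c). { apply HP_nonneg; auto. intros j. unfold DDG, DG.
      specialize (Hc j). unfold D2 in Hc. lra. }
    assert (0 <= HP DDG c * (b - a)) by (apply Rmult_le_pos; lra). lra. }
  set (lt := th * l1 + (1 - th) * l2).
  destruct (mvt (HP G) (HP DG) lt l1) as [c1 [Hc1 E1]]. intros x; apply HP_derive; auto.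
  destruct (mvt (HP G) (HP DG) lt l2) as [c2 [Hc2 E2]]. intros x; apply HP_derive; auto.
  assert (Ex : th * HP G l1 + (1 - th) * HP G l2 - HP G lt =
    th * (1 - th) * (l2 - l1) * (HP DG c2 - HP DG c1)).
  { replace (th * HP G l1 + (1 - th) * HP G l2 - HP G lt) with
      (th * (HP G l1 - HP G lt) + (1 - th) * (HP G l2 - HP G lt)) by ring.
    rewrite E1, E2. unfold lt. ring. }
  assert (0 <= th * (1 - th)) by (apply Rmult_le_pos; lra).
  unfold Rmin, Rmax in *.
  destruct (Rle_dec l1 l2).
  - assert (lt1 : l1 <= lt <= l2) by (unfold lt; nra).
    destruct (Rle_dec lt l1); destruct (Rle_dec lt l2);
      try (assert (c1 <= c2) by lra; assert (HP DG c1 <= HP DG c2) by (apply Hmono; lra);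
           assert (0 <= th * (1 - th) * (l2 - l1) * (HP DG c2 - HP DG c1))
             by (apply Rmult_le_pos; [apply Rmult_le_pos|]; lra); lra).
  - assert (lt1 : l2 <= lt <= l1) by (unfold lt; nra).
    destruct (Rle_dec lt l1); destruct (Rle_dec lt l2);
      try (assert (c2 <= c1) by lra; assert (HP DG c2 <= HP DG c1) by (apply Hmono; lra);
           assert (0 <= th * (1 - th) * (l1 - l2) * (HP DG c1 - HP DG c2))
             by (apply Rmult_le_pos; [apply Rmult_le_pos|]; lra); nra).
Qed.

Lemma growth_plus f g : growth f -> growth g -> growth (fun y => f y + g y).
Proof.
  intros [A [B [M [HA [HB Hf]]]]] [A' [B' [M' [HA' [HB' Hg]]]]].
  exists (A + A'), (B + B'), (M + M')%nat. split. lra. split. lra.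
  assert (Hm : forall N P x, xs N x <= xs (N + P) x).
  { intros N P x. induction P. rewrite Nat.add_0_r. lra.
    rewrite Nat.add_succ_r. cbn [xs]. pose proof (pos_INR (x (N + P)%nat)). lra. }
  intros x. eapply Rle_trans. apply Rabs_triang.
  pose proof (Hf x). pose proof (Hg x). pose proof (Hm M M' x). pose proof (Hm M' M x).
  rewrite Nat.add_comm in H2.
  pose proof (xs_nonneg M x). pose proof (xs_nonneg M' x).
  assert (B * xs M x <= B * xs (M + M') x) by (apply Rmult_le_compat_l; auto).
  assert (B' * xs M' x <= B' * xs (M + M') x) by (apply Rmult_le_compat_l; auto).
  lra.
Qed.

Lemma growth_scal f c : growth f -> growth (fun y => c * f y).
Proof.
  intros [A [B [M [HA [HB Hf]]]]]. exists (Rabs c * A), (Rabs c * B), M.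
  pose proof (Rabs_pos c). split. nra. split. nra.
  intros x. rewrite Rabs_mult. specialize (Hf x).
  replace (Rabs c * A + Rabs c * B * xs M x) with (Rabs c * (A + B * xs M x)) by ring.
  apply Rmult_le_compat_l; auto.
Qed.

Lemma growth_upd f t j : growth f -> growth (fun y => f (upd y t j)).
Proof.
  intros [A [B [M [HA [HB Hf]]]]]. exists (A + B * INR M * INR j), B, M.
  pose proof (pos_INR M). pose proof (pos_INR j).
  split. assert (0 <= B * INR M * INR j) by (apply Rmult_le_pos; [apply Rmult_le_pos|]; auto). lra.
  split; auto. intros x. eapply Rle_trans. apply Hf.
  pose proof (xs_upd M x t j).
  assert (B * xs M (upd x t j) <= B * (xs M x + INR M * INR j)) by (apply Rmult_le_compat_l; auto).
  lra.
Qed.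

Lemma Series_le_gen a b : (forall n, a n <= b n) -> ex_series a -> ex_series b ->
  Series a <= Series b.
Proof.
  intros H Ha Hb. assert (0 <= Series (fun n => b n - a n)).
  { rewrite <- Series_zero. apply Series_le. intros n; specialize (H n); split; lra.
    apply (@ex_series_minus R_AbsRing R_NormedModule); auto. }
  rewrite Series_minus in H0; auto. lra.
Qed.

Definition convt (t : nat) (f : (nat -> nat) -> R) :=
  forall x j, 0 <= f (upd x t (S (S j))) - 2 * f (upd x t (S j)) + f (upd x t j).

Lemma upd_nonneg (lam : nat -> R) t l k n : (forall i, (k <= i < k + n)%nat -> 0 <= lam i) -> 0 <= l ->
  forall i, (k <= i < k + n)%nat -> 0 <= upd lam t l i.
Proof. intros H Hl i Hi. unfold upd. destruct (Nat.eqb i t); auto. Qed.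

Lemma iexp_conv n : forall k lam f x t l1 l2 th,
  (k <= t < k + n)%nat -> (forall i, (k <= i < k + n)%nat -> 0 <= lam i) ->
  0 < l1 -> 0 < l2 -> 0 <= th <= 1 -> growth f -> convt t f ->
  iexp n k (upd lam t (th * l1 + (1 - th) * l2)) f x <=
  th * iexp n k (upd lam t l1) f x + (1 - th) * iexp n k (upd lam t l2) f x.
Proof.
  induction n; intros k lam f x t l1 l2 th Hkt Hl H1 H2 Hth Hf Hc. lia.
  assert (Hlt : 0 <= th * l1 + (1 - th) * l2) by nra.
  cbn [iexp].
  destruct (Nat.eq_dec k t) as [<- | Hne].
  - unfold upd at 1 4 7. rewrite Nat.eqb_refl.
    set (G := fun j => iexp n (S k) lam f (upd x k j)).
    assert (EG : forall l, Series (fun j => poisson_pmf l j * iexp n (S k) (upd lam k l) f (upd x k j))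
                 = HP G l).
    { intros l. rewrite <- series_HP. apply Series_ext. intros j. unfold G.
      rewrite (iexp_ext_lam n (S k) (upd lam k l) lam). reflexivity.
      intros i Hi. unfold upd. destruct (Nat.eqb_spec i k). lia. reflexivity. }
    rewrite !EG. apply HP_conv; auto.
    + destruct (iexp_growth n (S k) lam f) as [A [B [M [HA [HB Hg]]]]]; auto.
      intros i Hi; apply Hl; lia.
      exists (A + B * xs M x), (B * INR M). pose proof (xs_nonneg M x). pose proof (pos_INR M).
      split. nra. split. nra. intros j. unfold G. eapply Rle_trans. apply Hg.
      pose proof (xs_upd M x k j).
      assert (B * xs M (upd x k j) <= B * (xs M x + INR M * INR j)) by (apply Rmult_le_compat_l; auto).
      lra.
    + intros j. unfold D2, G.
      rewrite !(iexp_upd_comm n (S k) lam f x k) by lia.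
      assert (Hr : forall i, (S k <= i < S k + n)%nat -> 0 <= lam i) by (intros i Hi; apply Hl; lia).
      set (g2 := fun y : nat -> nat => f (upd y k (S (S j)))).
      set (g1 := fun y : nat -> nat => f (upd y k (S j))).
      set (g0 := fun y : nat -> nat => f (upd y k j)).
      assert (Gg2 : growth g2) by (apply growth_upd; auto).
      assert (Gg1 : growth g1) by (apply growth_upd; auto).
      assert (Gg0 : growth g0) by (apply growth_upd; auto).
      replace (iexp n (S k) lam g2 x - 2 * iexp n (S k) lam g1 x + iexp n (S k) lam g0 x)
        with (iexp n (S k) lam (fun y => (g2 y + (-2) * g1 y) + g0 y) x).
      2:{ rewrite iexp_plus; auto using growth_plus, growth_scal.
          rewrite iexp_plus; auto using growth_scal. rewrite iexp_scal. ring. }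
      apply iexp_nonneg; auto using growth_upd, growth_scal, growth_plus.
      intros y. specialize (Hc y j). unfold g2, g1, g0. lra.
  - assert (E : forall l, upd lam t l k = lam k).
    { intros l. unfold upd. destruct (Nat.eqb_spec k t); [lia|reflexivity]. }
    rewrite !E.
    assert (Hr : forall l, 0 <= l -> forall i, (S k <= i < S k + n)%nat -> 0 <= upd lam t l i).
    { intros l Hl' i Hi. apply (upd_nonneg lam t l k (S n)); auto. lia. }
    assert (Hex : forall l, 0 <= l -> ex_series (fun j => poisson_pmf (lam k) j *
                    iexp n (S k) (upd lam t l) f (upd x k j))).
    { intros l Hl'. pose proof (iexp_ex n k (upd lam t l) f x) as HH. rewrite E in HH.
      apply HH; auto. intros i Hi. apply (upd_nonneg lam t l k (S n)); auto. }
    rewrite <- !Series_scal_l. rewrite <- Series_plus.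
    apply Series_le_gen.
    + intros j. pose proof (pmf_nonneg (lam k) j) as Hp.
      assert (0 <= lam k) by (apply Hl; lia).
      assert (IH := IHn (S k) lam f (upd x k j) t l1 l2 th).
      assert (0 <= poisson_pmf (lam k) j) by auto.
      eapply Rle_trans. apply Rmult_le_compat_l. auto. apply IH; auto.
      lia. intros i Hi; apply Hl; lia. lra.
    + apply Hex; auto.
    + apply (@ex_series_plus R_AbsRing R_NormedModule).
      apply (@ex_series_scal_l R_AbsRing R_NormedModule). apply Hex; lra.
      apply (@ex_series_scal_l R_AbsRing R_NormedModule). apply Hex; lra.
    + apply (@ex_series_scal_l R_AbsRing R_NormedModule). apply Hex; lra.
    + apply (@ex_series_scal_l R_AbsRing R_NormedModule). apply Hex; lra.
Qed.

Lemma sum1_nonneg T g : (forall s, 0 <= g s) -> 0 <= sum1 T g.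
Proof. intros H. induction T; simpl. lra. pose proof (H (S T)). lra. Qed.

Lemma inv_bound q x s : Rabs (inv q x s) <= sum1 s (fun i => INR (q i)) + xs (S s) x.
Proof.
  induction s; cbn [inv sum1 xs]. rewrite Rabs_R0. simpl. pose proof (pos_INR (x O)). lra.
  cbn [xs] in IHs. eapply Rle_trans. apply Rabs_triang.
  eapply Rle_trans. apply Rplus_le_compat_l. apply Rabs_triang. rewrite Rabs_Ropp.
  rewrite (Rabs_pos_eq (INR (q (S s)))) by apply pos_INR. rewrite (Rabs_pos_eq (INR (x (S s)))) by apply pos_INR. lra.
Qed.

Lemma inv_upd q x t j s : (1 <= t)%nat ->
  inv q (upd x t j) s = inv q (upd x t 0%nat) s - (if Nat.leb t s then INR j else 0).
Proof.
  intros Ht. induction s; cbn [inv].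
  destruct (Nat.leb_spec t 0). lia. ring.
  rewrite IHs. unfold upd. destruct (Nat.eqb_spec (S s) t).
  - subst. destruct (Nat.leb_spec (S s) s). lia. destruct (Nat.leb_spec (S s) (S s)); [|lia].
    simpl (INR 0). ring.
  - destruct (Nat.leb_spec t s); destruct (Nat.leb_spec t (S s)); try lia; ring.
Qed.

Lemma pos_abs y : Rabs (Defs.pos y) <= Rabs y.
Proof.
  unfold Defs.pos, Rmax. destruct (Rle_dec y 0). rewrite Rabs_R0; apply Rabs_pos. lra.
Qed.

Lemma neg_abs y : Rabs (Defs.neg y) <= Rabs y.
Proof.
  unfold Defs.neg, Rmax. destruct (Rle_dec (- y) 0). rewrite Rabs_R0; apply Rabs_pos.
  rewrite Rabs_Ropp. lra.
Qed.

Lemma pos_conv c u : 0 <= Defs.pos (c - (u + 1 + 1)) - 2 * Defs.pos (c - (u + 1)) + Defs.pos (c - u).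
Proof.
  unfold Defs.pos, Rmax.
  destruct (Rle_dec (c - (u + 1 + 1)) 0); destruct (Rle_dec (c - (u + 1)) 0);
  destruct (Rle_dec (c - u) 0); lra.
Qed.

Lemma neg_conv c u : 0 <= Defs.neg (c - (u + 1 + 1)) - 2 * Defs.neg (c - (u + 1)) + Defs.neg (c - u).
Proof.
  unfold Defs.neg, Rmax.
  destruct (Rle_dec (- (c - (u + 1 + 1))) 0); destruct (Rle_dec (- (c - (u + 1))) 0);
  destruct (Rle_dec (- (c - u)) 0); lra.
Qed.

Lemma growth_inv (phi : R -> R) q s : (forall y, Rabs (phi y) <= Rabs y) ->
  growth (fun x => phi (inv q x s)).
Proof.
  intros H. exists (sum1 s (fun i => INR (q i))), 1, (S s).
  split. apply sum1_nonneg. intros; apply pos_INR. split. lra.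
  intros x. eapply Rle_trans. apply H. rewrite Rmult_1_l. apply inv_bound.
Qed.

Lemma convt_inv (phi : R -> R) q s t : (1 <= t)%nat ->
  (forall c u, 0 <= phi (c - (u + 1 + 1)) - 2 * phi (c - (u + 1)) + phi (c - u)) ->
  convt t (fun x => phi (inv q x s)).
Proof.
  intros Ht H x j. rewrite (inv_upd q x t (S (S j)) s Ht), (inv_upd q x t (S j) s Ht), (inv_upd q x t j s Ht).
  destruct (Nat.leb t s).
  - rewrite !S_INR. apply H.
  - rewrite !Rminus_0_r. lra.
Qed.

Lemma growth_mx s : growth (fun x => - INR (x s)).
Proof.
  exists 0, 1, (S s). split. lra. split. lra. intros x. rewrite Rabs_Ropp.
  rewrite Rabs_pos_eq by apply pos_INR. cbn [xs]. pose proof (xs_nonneg s x). lra.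
Qed.

Lemma convt_mx s t : convt t (fun x => - INR (x s)).
Proof.
  intros x j. unfold upd. destruct (Nat.eqb s t). rewrite !S_INR. lra. lra.
Qed.

Lemma sum1_conv T g0 g1 g2 th : (forall s, g0 s <= th * g1 s + (1 - th) * g2 s) ->
  sum1 T g0 <= th * sum1 T g1 + (1 - th) * sum1 T g2.
Proof. intros H. induction T; simpl. lra. specialize (H (S T)). lra. Qed.

Lemma scale_conv c a a1 a2 th : 0 <= c -> a <= th * a1 + (1 - th) * a2 ->
  c * a <= th * (c * a1) + (1 - th) * (c * a2).
Proof. intros Hc H. replace (th * (c * a1) + (1 - th) * (c * a2)) with (c * (th * a1 + (1 - th) * a2)) by ring.
  apply Rmult_le_compat_l; auto. Qed.

Theorem theorem5p3 (T : nat) (h b p : R) (w : nat -> R) (q : nat -> nat)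
  (lam : nat -> R) (t : nat) :
  0 <= h -> 0 <= b -> 0 <= p -> (forall k, 0 <= w k) ->
  (forall k, (1 <= k <= T)%nat -> 0 < lam k) ->
  (1 <= t <= T)%nat ->
  forall (l1 l2 theta : R), 0 < l1 -> 0 < l2 -> 0 <= theta <= 1 ->
    cost T h b p w (upd lam t (theta * l1 + (1 - theta) * l2)) q <=
    theta * cost T h b p w (upd lam t l1) q
    + (1 - theta) * cost T h b p w (upd lam t l2) q.
Proof.
  intros Hh Hb Hp Hw Hlam Ht l1 l2 th H1 H2 Hth.
  assert (Hc : forall f, growth f -> convt t f ->
    Expect T (upd lam t (th * l1 + (1 - th) * l2)) f <=
    th * Expect T (upd lam t l1) f + (1 - th) * Expect T (upd lam t l2) f).
  { intros f Gf Cf. unfold Expect. apply iexp_conv; auto. lia.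
    intros i Hi. left. apply Hlam. lia. }
  assert (Hmx : forall l s, Expect T (upd lam t l) (fun x => INR (x s)) =
     - Expect T (upd lam t l) (fun x => - INR (x s))).
  { intros l s. unfold Expect. rewrite iexp_opp. ring. }
  unfold cost.
  pose proof (scale_conv p _ _ _ th Hp
    (Hc _ (growth_inv Defs.neg q T neg_abs) (convt_inv Defs.neg q T t ltac:(lia) neg_conv))) as A0.
  assert (AS := sum1_conv T
    (fun s => h * Expect T (upd lam t (th * l1 + (1 - th) * l2)) (fun x => Defs.pos (inv q x s)) +
       b * Expect T (upd lam t (th * l1 + (1 - th) * l2)) (fun x => Defs.neg (inv q x s)) +
       w s * INR (q s) - p * Expect T (upd lam t (th * l1 + (1 - th) * l2)) (fun x => INR (x s)))
    (fun s => h * Expect T (upd lam t l1) (fun x => Defs.pos (inv q x s)) +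
       b * Expect T (upd lam t l1) (fun x => Defs.neg (inv q x s)) +
       w s * INR (q s) - p * Expect T (upd lam t l1) (fun x => INR (x s)))
    (fun s => h * Expect T (upd lam t l2) (fun x => Defs.pos (inv q x s)) +
       b * Expect T (upd lam t l2) (fun x => Defs.neg (inv q x s)) +
       w s * INR (q s) - p * Expect T (upd lam t l2) (fun x => INR (x s))) th).
  assert (HS : forall s,
    h * Expect T (upd lam t (th * l1 + (1 - th) * l2)) (fun x => Defs.pos (inv q x s)) +
       b * Expect T (upd lam t (th * l1 + (1 - th) * l2)) (fun x => Defs.neg (inv q x s)) +
       w s * INR (q s) - p * Expect T (upd lam t (th * l1 + (1 - th) * l2)) (fun x => INR (x s))
    <= th * (h * Expect T (upd lam t l1) (fun x => Defs.pos (inv q x s)) +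
       b * Expect T (upd lam t l1) (fun x => Defs.neg (inv q x s)) +
       w s * INR (q s) - p * Expect T (upd lam t l1) (fun x => INR (x s)))
    + (1 - th) * (h * Expect T (upd lam t l2) (fun x => Defs.pos (inv q x s)) +
       b * Expect T (upd lam t l2) (fun x => Defs.neg (inv q x s)) +
       w s * INR (q s) - p * Expect T (upd lam t l2) (fun x => INR (x s)))).
  { intros s. rewrite !Hmx.
    pose proof (scale_conv h _ _ _ th Hh
      (Hc _ (growth_inv Defs.pos q s pos_abs) (convt_inv Defs.pos q s t ltac:(lia) pos_conv))).
    pose proof (scale_conv b _ _ _ th Hb
      (Hc _ (growth_inv Defs.neg q s neg_abs) (convt_inv Defs.neg q s t ltac:(lia) neg_conv))).
    pose proof (scale_conv p _ _ _ th Hp (Hc _ (growth_mx s) (convt_mx s t))).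
    lra. }
  specialize (AS HS). lra.
Qed.
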